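(* Let a loop-tangle diagram be minimal, i.e. the disc bounded by its loop contains no $1$-sided and no $2$-sided faces. Then inside the disc there is at least one of the following: a triangular face one of whose sides is a connected subarc of the loop; two triangular faces sharing a side; a quadrilateral face sharing at least one side with a triangular face; or a pentagonal face sharing at least four of its sides with triangular faces.
   Context: In an oriented knot diagram, a loop is a subarc $\gamma^\dagger$ of the knot such that (1) $\gamma^\dagger$ has exactly one self-crossing $u$, forming a loop bounding a disc $R$; (2) apart from $u$, at every crossing $\gamma^\dagger$ meets, $\gamma^\dagger$ is the under-strand (or at every such crossing it is the over-strand); (3) the two edges incident to $u$ not on the loop lie outside $R$. The tangle consists of the arcs of the knot inside $R$, each crossing the loop at its two endpoints; loop plus tangle is the loop-tangle diagram. Its faces are the faces inside $R$ of the planar $4$-valent graph formed by the loop and tangle (vertices: $u$, crossings of the tangle with the loop, and crossings of the tangle inside $R$); an $N$-sided face (triangle for $N=3$, quadrilateral for $N=4$, pentagon for $N=5$) is one bounded by $N$ edges. *)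

(* Defs.v *)
From mathcomp Require Import all_boot.
Set Implicit Arguments. Unset Strict Implicit. Unset Printing Implicit Defensive.

Section LoopTangle.
Variable D : finType.          (* darts (half-edges) of the loop-tangle diagram *)
Variables (node edge : D -> D). (* node: rotation around a vertex; edge: other half of the edge *)

Definition face (x : D) : D := node (edge x).

Definition nV := fcard node predT.
Definition nE := fcard edge predT.
Definition nF := fcard face predT.

(* a connected planar (genus 0) combinatorial map *)
Definition planar_map : Prop :=
  [/\ injective node,
      (forall x, edge (edge x) = x),
      (forall x, edge x != x),
      (forall x y, connect [rel a b | (b == node a) || (b == edge a)] x y) &
      nV + nF = nE + 2].

(* o is a dart of the face lying outside the disc R bounded by the loop *)
Definition on_loop_face (o x : D) : bool := fconnect face o x.
Definition inner (o x : D) : bool := ~~ fconnect face o x.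
Definition boundary_vertex (o v : D) : Prop :=
  exists2 y, on_loop_face o y & fconnect node y v.
(* strand continuation: straight through a 4-valent crossing *)
Definition strand_step (x : D) : D := node (node (edge x)).

(* A loop-tangle diagram (its underlying planar 4-valent picture restricted to
   the closed disc R).  The loop is the boundary of the outer face o; on the
   loop there is the vertex u (degree 2 inside R) and crossings of the tangle
   with the loop (degree 3 inside R); interior vertices are crossings of the
   tangle (degree 4); every tangle strand, followed straight through
   crossings, reaches the loop (no closed curves inside R). *)
Definition loop_tangle (o : D) : Prop :=
  planar_map /\ [/\
      (* the loop is a simple closed curve: outer face visits each vertex once *)
      (forall x y, on_loop_face o x -> on_loop_face o y -> fconnect node x y -> x = y),
      (forall x, on_loop_face o x -> inner o (edge x)),
      (exists u, [/\ on_loop_face o u, order node u = 2 &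
         (forall x, on_loop_face o x -> ~~ fconnect node u x -> order node x = 3)]),
      (forall v, ~ boundary_vertex o v -> order node v = 4) &
      (forall x, exists k, boundary_vertex o (edge (iter k strand_step x)))].

Definition minimal_lt (o : D) : Prop :=
  forall x, inner o x -> order face x <> 1 /\ order face x <> 2.

Definition inner_triangle (o x : D) : bool := inner o x && (order face x == 3).

End LoopTangle.

(* Main.v *)
Require Import Defs.
From mathcomp Require Import all_boot all_order all_algebra.
From mathcomp Require Import ring lra.
From Stdlib Require Import Classical.
Set Implicit Arguments. Unset Strict Implicit. Unset Printing Implicit Defensive.
Import Order.TTheory GRing.Theory Num.Theory.
Local Open Scope ring_scope.

Section Gen.
Variables (T : finType) (f : T -> T).
Hypothesis finj : injective f.

Lemma order_conn x y : fconnect f x y -> order f x = order f y.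
Proof.
move=> cxy; rewrite /order; apply: eq_card => z.
by rewrite !inE; apply: (same_connect (fconnect_sym finj)).
Qed.

Lemma sum_orbit_const x (c : rat) :
  \sum_(y | fconnect f x y) c = c * (order f x)%:R.
Proof. by rewrite sumr_const mulr_natr. Qed.

Lemma orbit_sum (g : T -> rat) :
  \sum_x g x = \sum_x (order f x)%:R^-1 * \sum_(y | fconnect f x y) g y.
Proof.
rewrite [RHS](eq_bigr (fun x => \sum_y (if fconnect f x y then (order f x)%:R^-1 * g y else 0))); last first.
  by move=> x _; rewrite mulr_sumr big_mkcond.
rewrite exchange_big /=; apply: eq_bigr => y _.
rewrite -big_mkcond /=.
rewrite (eq_bigr (fun _ => (order f y)%:R^-1 * g y)); last first.
  by move=> x cxy; rewrite (order_conn cxy).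
rewrite sumr_const.
have -> : #|[pred x | fconnect f x y]| = order f y.
  by apply: eq_card => z; rewrite !inE fconnect_sym.
rewrite -[_ *+ order f y]mulr_natr mulrAC mulVf ?mul1r //.
by rewrite pnatr_eq0 -lt0n order_gt0.
Qed.

Lemma fcard_sum : (fcard f predT)%:R = \sum_x (order f x)%:R^-1 :> rat.
Proof.
rewrite (eq_bigr (fun x => (order f x)%:R^-1 * \sum_(y | fconnect f x y) (froots f y)%:R)); last first.
  move=> x _.
  rewrite (eq_bigr (fun y => if froots f y then 1 else 0)); last by move=> y _; case: (froots f y).
  rewrite -big_mkcondr /=.
  rewrite (big_pred1 (froot f x)) ?mulr1 //.
  move=> y; rewrite /= ; apply/andP/eqP.
    move=> [cxy /eqP ry]; rewrite -ry; apply/esym/eqP; rewrite (fingraph.root_connect (fconnect_sym finj)) //.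

  move=> ->; split; first exact: connect_root.
  exact: (fingraph.roots_root (fconnect_sym finj)).
rewrite -orbit_sum (eq_bigr (fun y => if froots f y then 1 else 0)); last by move=> y _; case: (froots f y).
rewrite -big_mkcond /= sumr_const.
by congr (_%:R); apply: eq_card => z; rewrite !inE andbT.
Qed.
End Gen.

Lemma sum_bool (T : finType) (b : pred T) : \sum_x ((b x)%:R : rat) = #|b|%:R.
Proof.
rewrite (eq_bigr (fun x => if b x then 1 else 0)); last by move=> x _; case: (b x).
by rewrite -big_mkcond sumr_const.
Qed.

Lemma sum_set (T : finType) (A : {set T}) : \sum_x (((x \in A) : nat)%:R : rat) = #|A|%:R.
Proof.
rewrite (eq_bigr (fun x => if x \in A then 1 else 0)); last by move=> x _; case: (x \in A).
by rewrite -big_mkcond sumr_const.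
Qed.

Section Main.
Variables (D : finType) (node edge : D -> D) (o u : D).
Local Notation fc := (face node edge).
Local Notation out := (on_loop_face node edge o).
Hypothesis node_inj : injective node.
Hypothesis edgeK : forall x, edge (edge x) = x.
Hypothesis edge_neq : forall x, edge x != x.
Hypothesis euler : nV node + nF node edge = (nE edge + 2)%N.
Hypothesis uout : out u.
Hypothesis uord : order node u = 2%N.
Hypothesis u3 : forall x, out x -> ~~ fconnect node u x -> order node x = 3%N.
Hypothesis int4 : forall v, ~ boundary_vertex node edge o v -> order node v = 4%N.
Hypothesis minl : minimal_lt node edge o.

Lemma edge_inj : injective edge. Proof. exact: (can_inj edgeK). Qed.
Lemma fc_inj : injective fc.
Proof. by move=> x y /node_inj /edge_inj. Qed.

Lemma out_conn x y : fconnect fc x y -> out x = out y.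
Proof. by move=> cxy; rewrite /on_loop_face (same_connect_r (fconnect_sym fc_inj) cxy). Qed.

Lemma node_fix x : node x = x -> order node x = 1.
Proof.
move=> nx; have := @order_cycle _ node [:: x] _ _ x.
by apply => //=; rewrite ?inE ?nx ?eqxx.
Qed.

Lemma kv_cases x :
  [\/ order node x = 4%N /\ ~ boundary_vertex node edge o x,
      order node x = 2%N /\ fconnect node u x |
      [/\ order node x = 3%N, ~~ fconnect node u x & boundary_vertex node edge o x]].
Proof.
case: (classic (boundary_vertex node edge o x)) => [bx|nbx].
  case: (bx) => y oy cyx.
  have [cux|ncux] := boolP (fconnect node u x).
    by apply: Or32; rewrite -(order_conn node_inj cux).
  apply: Or33; split => //.
  rewrite -(order_conn node_inj cyx) u3 //.
  by apply: contra ncux => cuy; apply: connect_trans cuy cyx.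
by apply: Or31; split => //; apply: int4.
Qed.

Lemma kv_ge2 x : (2 <= order node x)%N.
Proof. by case: (kv_cases x) => [[->]|[->]|[->]]. Qed.

Lemma tri_not_self y : order fc y = 3%N -> ~~ fconnect fc y (edge y).
Proof.
move=> oy; apply/negP; rewrite fconnect_orbit /orbit oy /= !inE.
case/or3P => /eqP e.
- by move: (edge_neq y); rewrite e eqxx.
- by move: (kv_ge2 (edge y)); rewrite (node_fix (esym e)).
- have e2 : fc (edge y) = y.
    by rewrite e; have := iter_order fc_inj y; rewrite oy.
  move: e2; rewrite /face edgeK => /node_fix e3.
  by move: (kv_ge2 y); rewrite e3.
Qed.

Definition ik x : rat := (order fc x)%:R^-1.
Definition iv x : rat := (order node x)%:R^-1.
Definition bo x : rat := (out x)%:R.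
Definition tri x : rat := (inner_triangle node edge o x)%:R.
Definition Pv x : rat := \sum_(y | fconnect node x y) bo y.
Definition h x : rat := 1 - 4 * iv x + iv x * Pv x.
Definition g x : rat := 3 * (1 - bo x) * (4 * ik x - 1) - tri x + tri (edge x).

Lemma Pv_ge0 x : 0 <= Pv x.
Proof. by apply: sumr_ge0 => y _; rewrite /bo ler0n. Qed.

Lemma Pv_ge1 x : boundary_vertex node edge o x -> 1 <= Pv x.
Proof.
case=> y oy cyx.
rewrite /Pv (bigD1 y) /=; last by rewrite fconnect_sym.
have : 0 <= \sum_(i | fconnect node x i && (i != y)) bo i.
  by apply: sumr_ge0 => z _; rewrite /bo ler0n.
rewrite /bo oy /=; lra.
Qed.

Lemma h_bound x : - (2%:R^-1) * (fconnect node u x)%:R <= h x.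
Proof.
rewrite /h /iv; have := Pv_ge0 x.
case: (kv_cases x) => [[-> nb]|[-> cux]|[-> /negbTE -> bx]] P0.
- have -> : (fconnect node u x) = false.
    by apply/negP => cux; apply: nb; exists u.
  rewrite /=; lra.
- have := Pv_ge1 (ex_intro2 _ _ u uout cux).
  rewrite cux /=; lra.
- have := Pv_ge1 bx.
  rewrite /=; lra.
Qed.


Lemma sum_h : -1 <= \sum_x h x.
Proof.
apply: le_trans (ler_sum _ (fun x _ => h_bound x)).
rewrite -mulr_sumr sum_bool.
have -> : #|[pred x | fconnect node u x]| = 2%N.
  by rewrite -uord; apply: eq_card.
lra.
Qed.

Lemma order_edge x : order edge x = 2%N.
Proof.
apply: (@order_cycle _ edge [:: x; edge x]) => /=.
- by rewrite edgeK !eqxx.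
- by rewrite inE eq_sym edge_neq.
- by rewrite inE eqxx.
Qed.

Lemma F1 : \sum_x (iv x + ik x - 2^-1) = 2.
Proof.
have e := congr1 (fun n : nat => n%:R : rat) euler; move: e => /=.
rewrite natrD natrD /nV /nF /nE !fcard_sum //; last exact: fc_inj; last exact: edge_inj.
under [X in _ = X + _ -> _]eq_bigr do rewrite order_edge.
rewrite sumrB big_split /= => ->; lra.
Qed.

Lemma F2 : \sum_x bo x * ik x = 1.
Proof.
rewrite (eq_bigr (fun x => if out x then ik o else 0)); last first.
  move=> x _; rewrite /bo; case ox: (out x) => /=; last by rewrite mul0r.
  by rewrite mul1r /ik (order_conn fc_inj ox).
rewrite -big_mkcond sumr_const /ik.
have -> : #|[pred x | out x]| = order fc o by apply: eq_card.
by rewrite -[_ *+ order fc o]mulr_natr mulVf // pnatr_eq0 -lt0n order_gt0.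
Qed.

Lemma F3 : \sum_x (iv x * Pv x - bo x) = 0.
Proof.
by rewrite sumrB (orbit_sum node_inj bo) subrr.
Qed.

Lemma F5 : \sum_x (tri (edge x) - tri x) = 0.
Proof.
by rewrite sumrB [X in _ - X](reindex_inj edge_inj) /= subrr.
Qed.

Lemma key : \sum_x g x = 3 * \sum_x h x + 12 * \sum_x (iv x + ik x - 2^-1)
   - 12 * \sum_x bo x * ik x - 3 * \sum_x (iv x * Pv x - bo x)
   + \sum_x (tri (edge x) - tri x).
Proof.
rewrite !mulr_sumr -big_split -sumrB -sumrB -big_split /=.
by apply: eq_bigr => x _; rewrite /g /h; field.
Qed.

Hypothesis nc1 : ~ (exists x, inner_triangle node edge o x /\ out (edge x)).
Hypothesis nc2 : ~ (exists x, [/\ inner_triangle node edge o x, inner_triangle node edge o (edge x)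
               & ~~ fconnect fc x (edge x)]).
Hypothesis nc3 : ~ (exists x, [/\ inner node edge o x, order fc x = 4%N
               & inner_triangle node edge o (edge x)]).
Hypothesis nc4 : ~ (exists x, [/\ inner node edge o x, order fc x = 5%N
               & (4 <= #|[set y | fconnect fc x y && inner_triangle node edge o (edge y)]|)%N]).

Lemma G_le0 x : \sum_(y | fconnect fc x y) g y <= 0.
Proof.
case ox: (out x).
  rewrite big1 // => y cxy.
  have oy : out y by rewrite -(out_conn cxy).
  have t1 : tri y = 0.
    by rewrite /tri /inner_triangle /inner; move: oy; rewrite /on_loop_face => ->.
  have t2 : tri (edge y) = 0.
    rewrite /tri; case e: (inner_triangle node edge o (edge y)) => //.
    by exfalso; apply: nc1; exists (edge y); rewrite edgeK.
  by rewrite /g /bo oy t1 t2 /=; ring.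
have ix : inner node edge o x by rewrite /inner; move: ox; rewrite /on_loop_face => ->.
have k3 : (3 <= order fc x)%N.
  have [m1 m2] := minl ix; move: (order_gt0 fc x) m1 m2.
  by case: (order fc x) => [|[|[|]]].
set k := order fc x.
have ck : ik x * k%:R = 1 by rewrite /ik mulVf // pnatr_eq0 -lt0n order_gt0.
set b : rat := ((k == 3%N) : nat)%:R.
rewrite (eq_bigr (fun y => (3 * (4 * ik x - 1) - b) + tri (edge y))); last first.
  move=> y cxy.
  have oy : out y = false by rewrite -(out_conn cxy).
  have ky : order fc y = k by rewrite /k (order_conn fc_inj cxy).
  move: oy; rewrite /on_loop_face => oy.
  by rewrite /g /bo /ik /tri /inner_triangle /inner oy ky /= /b /k; rewrite /on_loop_face oy /= subr0 mulr1.
rewrite big_split /= sum_orbit_const -/k.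
have -> : (3 * (4 * ik x - 1) - b) * k%:R = 12 * (ik x * k%:R) - 3 * k%:R - b * k%:R by ring.
rewrite ck.
set cnt := #|[set y | fconnect fc x y && inner_triangle node edge o (edge y)]|.
have Rc : \sum_(y | fconnect fc x y) tri (edge y) = cnt%:R.
  rewrite big_mkcond /= -sum_set /cnt.
  apply: eq_bigr => y _; rewrite inE /tri.
  by case: (fconnect fc x y).
rewrite Rc.
have cntk : (cnt <= k)%N.
  rewrite /cnt /k /order; apply: subset_leq_card; apply/subsetP => y.
  by rewrite inE => /andP[].
have cnt0 : (k <= 4)%N -> cnt = 0%N.
  move=> k4; apply/eqP; rewrite cards_eq0; apply/eqP/setP => y; rewrite !inE.
  apply/negP => /andP[cxy ite].
  have iy : inner node edge o y.
    by rewrite /inner -/(on_loop_face _ _ _ _) -(out_conn cxy) ox.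
  have ky : order fc y = k by rewrite /k (order_conn fc_inj cxy).
  have : k = 3%N \/ k = 4%N.
    by move: k3 k4; rewrite -/k; case: (k) => [|[|[|[|[|]]]]] //; auto.
  case=> [k3e|k4e]; last by apply: nc3; exists y; rewrite ky k4e.
  apply: nc2; exists y; split => //.
    by rewrite /inner_triangle iy ky k3e.
  by apply: tri_not_self; rewrite ky k3e.
have k5 : k = 5%N -> (cnt <= 3)%N.
  move=> k5; rewrite leqNgt; apply/negP => c4; apply: nc4; exists x; split => //.
have kr : 3%:R <= k%:R :> rat by rewrite ler_nat.
have cr : cnt%:R <= k%:R :> rat by rewrite ler_nat.
rewrite mulr1 /b.
case: (ltngtP k 5) => [k4|k6|k5e].
- rewrite cnt0 //.
  case: eqP => [->|kn3] /=; first lra.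
  have : (4 <= k)%N by rewrite -[(4 <= k)%N]/(3 < k)%N ltn_neqAle k3 andbT eq_sym; apply/eqP.
  rewrite -(ler_nat rat) => k4r; lra.
- have : 6%:R <= k%:R :> rat by rewrite ler_nat.
  have -> : (k == 3%N) = false by apply/eqP => e; move: k6; rewrite e.
  move=> /=; lra.
- have := k5 k5e; rewrite -(ler_nat rat) => c3.
  rewrite k5e /=; lra.
Qed.

Lemma sum_g : \sum_x g x <= 0.
Proof.
rewrite (orbit_sum fc_inj g); apply: sumr_le0 => x _.
by apply: mulr_ge0_le0; [rewrite invr_ge0 ler0n | apply: G_le0].
Qed.

Lemma contra_all : False.
Proof.
have := key; rewrite F1 F2 F3 F5.
have := sum_h; have := sum_g; lra.
Qed.
End Main.

Local Close Scope ring_scope.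

Theorem proposition5p12 (D : finType) (node edge : D -> D) (o : D) :
  loop_tangle node edge o ->
  minimal_lt node edge o ->
  (* a triangle with a side on the loop *)
  (exists x, inner_triangle node edge o x /\ on_loop_face node edge o (edge x))
  \/
  (* two distinct triangles sharing a side *)
  (exists x, [/\ inner_triangle node edge o x, inner_triangle node edge o (edge x)
               & ~~ fconnect (face node edge) x (edge x)])
  \/
  (* a quadrilateral sharing a side with a triangle *)
  (exists x, [/\ inner node edge o x, order (face node edge) x = 4
               & inner_triangle node edge o (edge x)])
  \/
  (* a pentagon sharing at least four of its sides with triangles *)
  (exists x, [/\ inner node edge o x, order (face node edge) x = 5
               & 4 <= #|[set y | fconnect (face node edge) x y
                                  && inner_triangle node edge o (edge y)]|]).
Proof.
move=> [[ninj eK eN _ eul] [_ _ [u [uo uord u3]] i4 _]] minl.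
apply: NNPP => H.
apply: (@contra_all D node edge o u ninj eK eN eul uo uord u3 i4 minl).
- by move=> h; apply: H; left.
- by move=> h; apply: H; right; left.
- by move=> h; apply: H; right; right; left.
- by move=> h; apply: H; right; right; right.
Qed.
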